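(* Let $ABC$ be a triangle with incenter $I$ and orthocenter $H$, and let $H_A, H_B, H_C$ be the orthocenters of the triangles $BIC$, $CIA$, $AIB$ respectively. The circumcircles of the triangles $AH_BH_C$, $BH_CH_A$, $CH_AH_B$ pass through a common point $X$. Let $O_A, O_B, O_C$ be the circumcenters of these three triangles and let $O_r$ be the circumcenter of triangle $O_AO_BO_C$. Then $X$ lies on the line $O_rH$. *)

(* Defs.v *)
From HB Require Import structures.
From mathcomp Require Import all_boot all_order all_algebra.
Set Implicit Arguments. Unset Strict Implicit. Unset Printing Implicit Defensive.
Import Order.TTheory GRing.Theory Num.Theory.
Local Open Scope ring_scope.

Definition point (R : rcfType) := (R * R)%type.

Section Geom.
Variable R : rcfType.
Implicit Types P Q S O X : point R.

Definition psub P Q : point R := (P.1 - Q.1, P.2 - Q.2).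
Definition dot P Q : R := P.1 * Q.1 + P.2 * Q.2.
Definition dist2 P Q : R := dot (psub P Q) (psub P Q).
Definition dist P Q : R := Num.sqrt (dist2 P Q).

Definition collinear P Q S : Prop :=
  (Q.1 - P.1) * (S.2 - P.2) - (Q.2 - P.2) * (S.1 - P.1) = 0.

Definition is_orthocenter Hp P Q S : Prop :=
  dot (psub Hp P) (psub Q S) = 0 /\
  dot (psub Hp Q) (psub S P) = 0 /\
  dot (psub Hp S) (psub P Q) = 0.

Definition is_circumcenter O P Q S : Prop :=
  ~ collinear P Q S /\ dist2 O P = dist2 O Q /\ dist2 O P = dist2 O S.

Definition on_circle X O P : Prop := dist2 O X = dist2 O P.

Definition incenter (A B C : point R) : point R :=
  let a := dist B C in let b := dist C A in let c := dist A B in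
  ((a * A.1 + b * B.1 + c * C.1) / (a + b + c),
   (a * A.2 + b * B.2 + c * C.2) / (a + b + c)).
End Geom.

(* Main.v *)
Require Import Defs.
From HB Require Import structures.
From mathcomp Require Import all_boot all_order all_algebra.
From mathcomp Require Import ring lra.
Set Implicit Arguments. Unset Strict Implicit. Unset Printing Implicit Defensive.
Import Order.TTheory GRing.Theory Num.Theory.
Local Open Scope ring_scope.

Section G.
Variable R : rcfType.
Implicit Types P Q S O X : point R.

Lemma lin2 (a b c d u v : R) : a*u + b*v = 0 -> c*u + d*v = 0 -> a*d - b*c != 0 ->
  u = 0 /\ v = 0.
Proof.
move=> e1 e2 hD.
have hu : u * (a*d - b*c) = 0.
  have -> : u * (a*d - b*c) = d*(a*u+b*v) - b*(c*u+d*v) by ring.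
  by rewrite e1 e2; ring.
have hv : v * (a*d - b*c) = 0.
  have -> : v * (a*d - b*c) = a*(c*u+d*v) - c*(a*u+b*v) by ring.
  by rewrite e1 e2; ring.
move/eqP: hu; rewrite mulf_eq0 (negbTE hD) orbF => /eqP ->.
move/eqP: hv; rewrite mulf_eq0 (negbTE hD) orbF => /eqP ->.
by [].
Qed.

Lemma pt_eq (P Q : point R) : P.1 - Q.1 = 0 -> P.2 - Q.2 = 0 -> P = Q.
Proof.
case: P Q => p1 p2 [q1 q2] /= h1 h2.
by congr pair; apply/eqP; rewrite -subr_eq0; apply/eqP.
Qed.

Lemma orth_uniq H1 H2 P Q S : is_orthocenter H1 P Q S -> is_orthocenter H2 P Q S ->
  ~ collinear P Q S -> H1 = H2.
Proof.
rewrite /is_orthocenter /collinear /dot /psub /=.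
move=> [e1 [e2 _]] [f1 [f2 _]] nc.
have [] := @lin2 (Q.1 - S.1) (Q.2 - S.2) (S.1 - P.1) (S.2 - P.2) (H1.1 - H2.1) (H1.2 - H2.2).
- have -> : (Q.1 - S.1) * (H1.1 - H2.1) + (Q.2 - S.2) * (H1.2 - H2.2) =
    ((H1.1 - P.1) * (Q.1 - S.1) + (H1.2 - P.2) * (Q.2 - S.2)) -
    ((H2.1 - P.1) * (Q.1 - S.1) + (H2.2 - P.2) * (Q.2 - S.2)) by ring.
  by rewrite e1 f1 subr0.
- have -> : (S.1 - P.1) * (H1.1 - H2.1) + (S.2 - P.2) * (H1.2 - H2.2) =
    ((H1.1 - Q.1) * (S.1 - P.1) + (H1.2 - Q.2) * (S.2 - P.2)) -
    ((H2.1 - Q.1) * (S.1 - P.1) + (H2.2 - Q.2) * (S.2 - P.2)) by ring.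
  by rewrite e2 f2 subr0.
- apply/eqP => h; apply: nc; rewrite -h; ring.
- exact: pt_eq.
Qed.

Lemma circ_uniq O1 O2 P Q S : is_circumcenter O1 P Q S ->
  dist2 O2 P = dist2 O2 Q -> dist2 O2 P = dist2 O2 S -> O1 = O2.
Proof.
move=> [nc [e1 e2]] f1 f2.
have [] := @lin2 (2*(Q.1 - P.1)) (2*(Q.2 - P.2)) (2*(S.1 - P.1)) (2*(S.2 - P.2)) (O1.1 - O2.1) (O1.2 - O2.2).
- have -> : 2*(Q.1 - P.1) * (O1.1 - O2.1) + 2*(Q.2 - P.2) * (O1.2 - O2.2) =
     (dist2 O1 P - dist2 O1 Q) - (dist2 O2 P - dist2 O2 Q)
    by rewrite /dist2 /dot /psub /=; ring.
  by rewrite e1 f1 !subrr.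
- have -> : 2*(S.1 - P.1) * (O1.1 - O2.1) + 2*(S.2 - P.2) * (O1.2 - O2.2) =
     (dist2 O1 P - dist2 O1 S) - (dist2 O2 P - dist2 O2 S)
    by rewrite /dist2 /dot /psub /=; ring.
  by rewrite e2 f2 !subrr.
- apply/eqP => h; apply: nc; rewrite /collinear.
  have : 4 * ((Q.1 - P.1) * (S.2 - P.2) - (Q.2 - P.2) * (S.1 - P.1)) = 0 by rewrite -h; ring.
  by move/eqP; rewrite mulf_eq0 => /orP [/eqP h4|/eqP //]; move: h4; lra.
- exact: pt_eq.
Qed.

Lemma X_uniq X1 X2 O1 O2 O3 P1 P2 P3 :
  on_circle X1 O1 P1 -> on_circle X1 O2 P2 -> on_circle X1 O3 P3 ->
  on_circle X2 O1 P1 -> on_circle X2 O2 P2 -> on_circle X2 O3 P3 ->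
  ~ collinear O1 O2 O3 -> X1 = X2.
Proof.
rewrite /on_circle.
move=> e1 e2 e3 f1 f2 f3 nc.
have [] := @lin2 (2*(O2.1 - O1.1)) (2*(O2.2 - O1.2)) (2*(O3.1 - O1.1)) (2*(O3.2 - O1.2)) (X1.1 - X2.1) (X1.2 - X2.2).
- have -> : 2*(O2.1 - O1.1) * (X1.1 - X2.1) + 2*(O2.2 - O1.2) * (X1.2 - X2.2) =
     (dist2 O1 X1 - dist2 O1 X2) - (dist2 O2 X1 - dist2 O2 X2)
    by rewrite /dist2 /dot /psub /=; ring.
  by rewrite e1 f1 e2 f2 !subrr.
- have -> : 2*(O3.1 - O1.1) * (X1.1 - X2.1) + 2*(O3.2 - O1.2) * (X1.2 - X2.2) =
     (dist2 O1 X1 - dist2 O1 X2) - (dist2 O3 X1 - dist2 O3 X2)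
    by rewrite /dist2 /dot /psub /=; ring.
  by rewrite e1 f1 e3 f3 !subrr.
- apply/eqP => h; apply: nc; rewrite /collinear.
  have : 4 * ((O2.1 - O1.1) * (O3.2 - O1.2) - (O2.2 - O1.2) * (O3.1 - O1.1)) = 0 by rewrite -h; ring.
  by move/eqP; rewrite mulf_eq0 => /orP [/eqP h4|/eqP //]; move: h4; lra.
- exact: pt_eq.
Qed.
End G.


Section Core.
Variable R : rcfType.

Definition Af (x y r : R) : point R := (y*(x^+2 - r^+2)/(x*y - r^+2), 2*x*y*r/(x*y - r^+2)).
Definition Bf : point R := (0, 0).
Definition Cf (x y : R) : point R := (x+y, 0).
Definition Hf (x y r : R) : point R := (y*(x^+2 - r^+2)/(x*y - r^+2), (x^+2 - r^+2)*(y^+2 - r^+2)/(2*r*(x*y - r^+2))).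
Definition HAf (x y r : R) : point R := (x, x*y/r).
Definition HBf (x y r : R) : point R := ((x^+2*y - x*r^+2 - 2*y*r^+2)/(x*y - r^+2), r*(x*y - y^+2)/(x*y - r^+2)).
Definition HCf (x y r : R) : point R := ((x^+2*y + x*r^+2)/(x*y - r^+2), r*(x*y - x^+2)/(x*y - r^+2)).
Definition OAf (x y r : R) : point R := ((3*x^+2*y - x*y^+2 - x*r^+2 - y*r^+2)/(2*(x*y - r^+2)), r*(-x^+2 + 4*x*y - y^+2 - 2*r^+2)/(2*(x*y - r^+2))).
Definition OBf (x y r : R) : point R := ((2*x^+2*y - x*y^+2 - x*r^+2 + 2*y*r^+2)/(2*(x*y - r^+2)), (x^+2*y^+2 - x^+2*r^+2 - 2*r^+4)/(2*r*(x*y - r^+2))).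
Definition OCf (x y r : R) : point R := ((3*x^+2*y - 4*x*r^+2 - y*r^+2)/(2*(x*y - r^+2)), (x^+2*y^+2 - y^+2*r^+2 - 2*r^+4)/(2*r*(x*y - r^+2))).
Definition Orf (x y r : R) : point R := ((3*x - y)/2, (x^+2*y^+2 - x^+2*r^+2 + 4*x*y*r^+2 - y^+2*r^+2 - 7*r^+4)/(4*r*(x*y - r^+2))).
Definition Qf (x y r : R) : R := x^+2*y^+2 + r^+2*x^+2 - 8*r^+2*x*y + r^+2*y^+2 + 9*r^+4.
Definition Xf (x y r : R) : point R :=
  ((2*x^+4*y^+3 + 2*r^+2*x^+4*y - x^+3*y^+4 - 16*r^+2*x^+3*y^+2 - 3*r^+4*x^+3 + 8*r^+2*x^+2*y^+3 + 28*r^+4*x^+2*y - r^+2*x*y^+4 - 12*r^+4*x*y^+2 - 15*r^+6*x + 2*r^+4*y^+3 + 6*r^+6*y)/((x*y - r^+2)*Qf x y r),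
   r^+3*(4*x^+3*y - 10*x^+2*y^+2 + 4*x*y^+3 - 6*r^+2*x^+2 + 24*r^+2*x*y - 6*r^+2*y^+2 - 18*r^+4)/((x*y - r^+2)*Qf x y r)).

Lemma core (x y r : R) (hx : 0 < x) (hy : 0 < y) (hr : r != 0) (hdp : 0 < x*y - r^+2)
  (H HA HB HC OA OB OC Or : point R) :
  is_orthocenter H (Af x y r) Bf (Cf x y) ->
  is_orthocenter HA Bf (x, r) (Cf x y) ->
  is_orthocenter HB (Cf x y) (x, r) (Af x y r) ->
  is_orthocenter HC (Af x y r) (x, r) Bf ->
  is_circumcenter OA (Af x y r) HB HC ->
  is_circumcenter OB Bf HC HA ->
  is_circumcenter OC (Cf x y) HA HB ->
  is_circumcenter Or OA OB OC ->
  (exists X : point R, on_circle X OA (Af x y r) /\ on_circle X OB Bf /\ on_circle X OC (Cf x y)) /\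
  (forall X : point R,
     on_circle X OA (Af x y r) -> on_circle X OB Bf -> on_circle X OC (Cf x y) ->
     collinear X Or H).
Proof.
move=> hH hHA hHB hHC hOA hOB hOC hOr.
have hd : x*y - r^+2 != 0 by rewrite gt_eqF.
have hx0 : x != 0 by rewrite gt_eqF.
have hy0 : y != 0 by rewrite gt_eqF.
have hxy : x + y != 0 by rewrite gt_eqF // addr_gt0.
have hx2 : x^+2 + r^+2 != 0.
  by rewrite gt_eqF // ltr_pwDl ?sqr_ge0 // exprn_gt0.
have hy2 : y^+2 + r^+2 != 0.
  by rewrite gt_eqF // ltr_pwDl ?sqr_ge0 // exprn_gt0.
have h2 : (2:R) != 0 by rewrite pnatr_eq0.
have eH : H = Hf x y r.
  apply: (orth_uniq hH).
    rewrite /is_orthocenter /dot /psub /Hf /Af /Bf /Cf /=.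
    by split; [|split]; field; rewrite ?hd ?hr.
  rewrite /collinear /Af /Bf /Cf /= => h; move: h.
  have -> : (0 - y * (x ^+ 2 - r ^+ 2) / (x * y - r ^+ 2)) * (0 - 2 * x * y * r / (x * y - r ^+ 2)) -
   (0 - 2 * x * y * r / (x * y - r ^+ 2)) * (x + y - y * (x ^+ 2 - r ^+ 2) / (x * y - r ^+ 2))
    = 2*x*y*r*(x+y)/(x*y - r^+2) by field; rewrite ?hd.
  by apply/eqP; rewrite !mulf_neq0 ?invr_neq0.
have eHA : HA = HAf x y r.
  apply: (orth_uniq hHA).
    rewrite /is_orthocenter /dot /psub /HAf /Bf /Cf /=.
    by split; [|split]; field; rewrite ?hd ?hr.
  rewrite /collinear /Bf /Cf /= => h; move: h.
  have -> : (x - 0) * (0 - 0) - (r - 0) * (x + y - 0) = - (r * (x+y)) by ring.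
  by apply/eqP; rewrite oppr_eq0 !mulf_neq0.
have eHB : HB = HBf x y r.
  apply: (orth_uniq hHB).
    rewrite /is_orthocenter /dot /psub /HBf /Af /Cf /=.
    by split; [|split]; field; rewrite ?hd ?hr.
  rewrite /collinear /Af /Cf /= => h; move: h.
  have -> : (x - (x + y)) * (2 * x * y * r / (x * y - r ^+ 2) - 0) -
     (r - 0) * (y * (x ^+ 2 - r ^+ 2) / (x * y - r ^+ 2) - (x + y))
    = - (x * r * (y^+2 + r^+2) / (x*y - r^+2)) by field; rewrite ?hd.
  by apply/eqP; rewrite oppr_eq0 !mulf_neq0 ?invr_neq0.
have eHC : HC = HCf x y r.
  apply: (orth_uniq hHC).
    rewrite /is_orthocenter /dot /psub /HCf /Af /Bf /=.
    by split; [|split]; field; rewrite ?hd ?hr.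
  rewrite /collinear /Af /Bf /= => h; move: h.
  have -> : (x - y * (x ^+ 2 - r ^+ 2) / (x * y - r ^+ 2)) * (0 - 2 * x * y * r / (x * y - r ^+ 2)) -
    (r - 2 * x * y * r / (x * y - r ^+ 2)) * (0 - y * (x ^+ 2 - r ^+ 2) / (x * y - r ^+ 2))
    = - (y * r * (x^+2 + r^+2) / (x*y - r^+2)) by field; rewrite ?hd.
  by apply/eqP; rewrite oppr_eq0 !mulf_neq0 ?invr_neq0.
subst H HA HB HC.
have eOA : OA = OAf x y r.
  apply: (circ_uniq hOA); rewrite /dist2 /dot /psub /OAf /Af /HBf /HCf /=;
  by field; rewrite ?hd ?hr.
have eOB : OB = OBf x y r.
  apply: (circ_uniq hOB); rewrite /dist2 /dot /psub /OBf /Bf /HCf /HAf /=;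
  by field; rewrite ?hd ?hr.
have eOC : OC = OCf x y r.
  apply: (circ_uniq hOC); rewrite /dist2 /dot /psub /OCf /Cf /HAf /HBf /=;
  by field; rewrite ?hd ?hr.
subst OA OB OC.
have eOr : Or = Orf x y r.
  apply: (circ_uniq hOr); rewrite /dist2 /dot /psub /Orf /OAf /OBf /OCf /=;
  by field; rewrite ?hd ?hr.
subst Or.
have hQ : Qf x y r != 0.
  apply/eqP => hQ0; case: hOr => nc _; apply: nc.
  rewrite /collinear /OAf /OBf /OCf /=.
  apply: (@eq_trans _ _ (-(x*y*(x+y)*Qf x y r)/(4*r*(x*y - r^+2)^+2))).
    by rewrite /Qf; field; rewrite ?hd ?hr.
  by rewrite hQ0 mulr0 oppr0 mul0r.
have ncO : ~ collinear (OAf x y r) (OBf x y r) (OCf x y r) by case: hOr.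
move: hQ; rewrite /Xf /Qf => hQ.
have ex : on_circle (Xf x y r) (OAf x y r) (Af x y r) /\ on_circle (Xf x y r) (OBf x y r) Bf /\
   on_circle (Xf x y r) (OCf x y r) (Cf x y).
  rewrite /on_circle /dist2 /dot /psub /Xf /Qf /OAf /OBf /OCf /Af /Bf /Cf /=.
  split; [|split]; field; rewrite ?hd ?hr /=;
    by apply: (contraNneq _ hQ) => h; apply/eqP; rewrite -h; ring.
split; first by exists (Xf x y r).
move=> X e1 e2 e3.
have -> : X = Xf x y r.
  by case: ex => f1 [f2 f3]; apply: (X_uniq e1 e2 e3 f1 f2 f3 ncO).
rewrite /collinear /Xf /Qf /Orf /Hf /=.
field; rewrite ?hd ?hr ?andbT /=;
  by apply: (contraNneq _ hQ) => h; apply/eqP; rewrite -h; ring.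
Qed.
End Core.
Arguments Bf {R}.
Section Frame.
Variable R : rcfType.

Lemma dist2_ge0 (P Q : point R) : 0 <= dist2 P Q.
Proof. by rewrite /dist2 /dot -!expr2 addr_ge0 ?sqr_ge0. Qed.

Lemma dist_sqr (P Q : point R) : dist P Q ^+ 2 = dist2 P Q.
Proof. by rewrite /dist sqr_sqrtr ?dist2_ge0. Qed.

Lemma dist_ge0 (P Q : point R) : 0 <= dist P Q.
Proof. by rewrite /dist sqrtr_ge0. Qed.

Lemma eq_via (u v K E : R) : u - v = E * K -> E = 0 -> u = v.
Proof. by move=> h e; apply/eqP; rewrite -subr_eq0 h e mul0r. Qed.

Lemma eq_via2 (u v K1 K2 E1 E2 : R) : u - v = E1 * K1 + E2 * K2 -> E1 = 0 -> E2 = 0 -> u = v.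
Proof. by move=> h e1 e2; apply/eqP; rewrite -subr_eq0 h e1 e2 !mul0r addr0. Qed.

Lemma frame (a p q : R) : 0 < a -> q != 0 ->
  exists x y r : R, [/\ 0 < x, 0 < y, r != 0 & 0 < x*y - r^+2] /\
    [/\ ((p, q) : point R) = Af x y r, ((a, 0) : point R) = Cf x y &
    incenter (p, q) Bf (a, 0) = (x, r)].
Proof.
move=> ha hq.
have da : dist Bf (a, 0) = a.
  rewrite /dist /dist2 /dot /psub /Bf /=.
  by rewrite !sub0r mulrNN oppr0 mulr0 addr0 -expr2 sqrtr_sqr ger0_norm // ltW.
rewrite /incenter da.
set b := dist (a, 0) (p, q).
set c := dist (p, q) Bf.
have hb2 : b^+2 = (a - p)^+2 + q^+2.
  by rewrite /b dist_sqr /dist2 /dot /psub /= sub0r mulrNN -!expr2.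
have hc2 : c^+2 = p^+2 + q^+2.
  by rewrite /c dist_sqr /dist2 /dot /psub /Bf /= !subr0 -!expr2.
have hb0 : 0 <= b by apply: dist_ge0.
have hc0 : 0 <= c by apply: dist_ge0.
have hq2 : 0 < q^+2 by rewrite exprn_even_gt0.
have h1 : p < c by nra.
have h2 : - p < c by nra.
have h3 : a - p < b by nra.
have h4 : p - a < b by nra.
have hx : 0 < a + c - b.
  have : b^+2 < (a + c)^+2 by rewrite hb2; nra.
  by nra.
have hy : 0 < a + b - c.
  have : c^+2 < (a + b)^+2 by rewrite hc2; nra.
  by nra.
have hz : 0 < b + c - a by lra.
pose x := (a + c - b)/2. pose y := (a + b - c)/2. pose z := (b + c - a)/2.
pose r := a * q / (a + b + c).
have es : a + b + c != 0 by rewrite gt_eqF //; lra.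
have er : r * (a + b + c) = a * q by rewrite /r; field.
have ea : a = x + y by rewrite /x /y; field.
have eb : b = y + z by rewrite /y /z; field.
have ec : c = x + z by rewrite /x /z; field.
have hx0 : 0 < x by rewrite /x divr_gt0.
have hy0 : 0 < y by rewrite /y divr_gt0.
have hz0 : 0 < z by rewrite /z divr_gt0.
have hr0 : r != 0 by rewrite /r !mulf_neq0 ?invr_neq0 // gt_eqF.
clearbody x y z r b c.
subst a b c.
have hs : x + y + z != 0 by rewrite gt_eqF //; lra.
have E1 : (x + y) * p - (x^+2 + x*y + x*z - y*z) = 0.
  apply: (@eq_via _ _ (-1/2) ((x+z)^+2 - p^+2 - q^+2 - ((y+z)^+2 - (x+y-p)^+2 - q^+2))).
    by field.
  by rewrite hb2 hc2; ring.
have key : 4*x*y*z*(x+y+z) - (x+y)^+2 * q^+2 = 0.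
  have -> : (x+y)^+2 * q^+2 = (x+y)^+2 * ((x+z)^+2 - p^+2) by rewrite hc2; ring.
  have -> : (x+y)^+2 * ((x+z)^+2 - p^+2) = (x+y)^+2 * (x+z)^+2 - ((x+y) * p)^+2 by ring.
  have -> : (x+y) * p = x^+2 + x*y + x*z - y*z.
    by apply/eqP; rewrite -subr_eq0 E1.
  ring.
have E3 : 2 * r * (x + y + z) - (x + y) * q = 0.
  by rewrite -er; ring.
have E2 : z * (x*y - r^+2) - r^+2 * (x + y) = 0.
  have hr' : r = (x+y)*q/(2*(x+y+z)).
    by apply: (@eq_via _ _ (1/(2*(x+y+z))) (2 * r * (x + y + z) - (x + y) * q)) => //; field.
  rewrite hr'.
  apply/eqP; rewrite subr_eq0; apply/eqP.
  apply: (@eq_via _ _ (1/(4*(x+y+z))) (4*x*y*z*(x+y+z) - (x+y)^+2 * q^+2)) => //.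
  by field.
have hdp : 0 < x*y - r^+2.
  have : 0 < z * (x*y - r^+2).
    have -> : z * (x*y - r^+2) = r^+2 * (x + y) by apply/eqP; rewrite -subr_eq0 E2.
    by rewrite mulr_gt0 ?exprn_even_gt0 ?addr_gt0.
  by rewrite pmulr_rgt0.
have hd : x*y - r^+2 != 0 by rewrite gt_eqF.
have hxy : x + y != 0 by rewrite gt_eqF // addr_gt0.
exists x, y, r; split; first by split.
split.
- rewrite /Af; congr (_, _).
    apply: (@eq_via2 _ _ (1/(x+y)) ((x-y)/((x+y)*(x*y - r^+2))) _ _ _ E1 E2).
    by field; rewrite ?hd ?hxy.
  apply: (@eq_via2 _ _ (-1/(x+y)) (2*r/((x+y)*(x*y - r^+2))) _ _ _ E3 E2).
  by field; rewrite ?hd ?hxy.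
- by [].
- rewrite /Bf /=; congr (_, _).
    apply: (@eq_via _ _ (1/(2*(x+y+z))) _ _ E1).
    by field; rewrite hs /=; rewrite gt_eqF //; lra.
  apply: (@eq_via _ _ (-1/(2*(x+y+z))) _ _ E3).
  by field; rewrite hs /=; rewrite gt_eqF //; lra.
Qed.
End Frame.
Section Pull.
Variable R : rcfType.
Variables (T : point R) (e1 e2 : R).
Hypothesis he : e1^+2 + e2^+2 = 1.

Definition pull (P : point R) : point R :=
  ((P.1 - T.1)*e1 + (P.2 - T.2)*e2, (P.2 - T.2)*e1 - (P.1 - T.1)*e2).
Definition push (u : point R) : point R :=
  (T.1 + u.1*e1 - u.2*e2, T.2 + u.1*e2 + u.2*e1).
Definition colx (P Q S : point R) : R :=
  (Q.1 - P.1) * (S.2 - P.2) - (Q.2 - P.2) * (S.1 - P.1).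

Lemma pull_push u : pull (push u) = u.
Proof.
case: u => u1 u2; rewrite /pull /push /=; congr (_, _).
  transitivity (u1 * (e1^+2 + e2^+2)); first by ring.
  by rewrite he mulr1.
transitivity (u2 * (e1^+2 + e2^+2)); first by ring.
by rewrite he mulr1.
Qed.

Lemma pull_dot P Q S U :
  dot (psub (pull P) (pull Q)) (psub (pull S) (pull U)) = dot (psub P Q) (psub S U).
Proof.
transitivity ((e1^+2 + e2^+2) * dot (psub P Q) (psub S U)); last by rewrite he mul1r.
rewrite /dot /psub /pull /=; ring.
Qed.

Lemma pull_colx P Q S : colx (pull P) (pull Q) (pull S) = colx P Q S.
Proof.
transitivity ((e1^+2 + e2^+2) * colx P Q S); last by rewrite he mul1r.
rewrite /colx /pull /=; ring.
Qed.

Lemma pull_coll P Q S : collinear (pull P) (pull Q) (pull S) <-> collinear P Q S.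
Proof.
change (colx (pull P) (pull Q) (pull S) = 0 <-> colx P Q S = 0).
by rewrite pull_colx.
Qed.

Lemma pull_dist2 P Q : dist2 (pull P) (pull Q) = dist2 P Q.
Proof. by rewrite /dist2 pull_dot. Qed.

Lemma pull_dist P Q : dist (pull P) (pull Q) = dist P Q.
Proof. by rewrite /dist pull_dist2. Qed.

Lemma pull_orth Hp P Q S :
  is_orthocenter (pull Hp) (pull P) (pull Q) (pull S) <-> is_orthocenter Hp P Q S.
Proof. by rewrite /is_orthocenter !pull_dot. Qed.

Lemma pull_circ O P Q S :
  is_circumcenter (pull O) (pull P) (pull Q) (pull S) <-> is_circumcenter O P Q S.
Proof. by rewrite /is_circumcenter !pull_dist2 pull_coll. Qed.

Lemma pull_oncircle X O P : on_circle (pull X) (pull O) (pull P) <-> on_circle X O P.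
Proof. by rewrite /on_circle !pull_dist2. Qed.

Lemma pull_incenter A B C : dist B C + dist C A + dist A B != 0 ->
  pull (incenter A B C) = incenter (pull A) (pull B) (pull C).
Proof.
move=> hs; rewrite /incenter !pull_dist.
move: hs; set a := dist B C; set b := dist C A; set c := dist A B => hs.
rewrite /pull /=; congr (_, _); field; by rewrite hs.
Qed.
End Pull.

Unset Implicit Arguments.

Theorem proposition5p6 (R : rcfType) (A B C H HA HB HC OA OB OC Or : point R) :
  ~ collinear A B C ->
  is_orthocenter H A B C ->
  is_orthocenter HA B (incenter A B C) C ->
  is_orthocenter HB C (incenter A B C) A ->
  is_orthocenter HC A (incenter A B C) B ->
  is_circumcenter OA A HB HC ->
  is_circumcenter OB B HC HA ->
  is_circumcenter OC C HA HB ->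
  is_circumcenter Or OA OB OC ->
  (exists X : point R, on_circle X OA A /\ on_circle X OB B /\ on_circle X OC C) /\
  (forall X : point R,
     on_circle X OA A -> on_circle X OB B -> on_circle X OC C ->
     collinear X Or H).
Proof.
move=> nc hH hHA hHB hHC hOA hOB hOC hOr.
have hBC : dist2 B C != 0.
  apply/eqP => h0; apply: nc.
  move: h0; rewrite /dist2 /dot /psub -!expr2 => /eqP.
  rewrite paddr_eq0 ?sqr_ge0 // !sqrf_eq0 !subr_eq0 => /andP [/eqP e1 /eqP e2].
  by rewrite /collinear e1 e2; ring.
set a0 := dist B C.
have ha0 : 0 < a0 by rewrite /a0 /dist sqrtr_gt0 lt_def hBC dist2_ge0.
have ha0' : a0 != 0 by rewrite gt_eqF.
pose e1 := (C.1 - B.1)/a0.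
pose e2 := (C.2 - B.2)/a0.
have he : e1^+2 + e2^+2 = 1.
  have : a0^+2 = dist2 B C by rewrite /a0 dist_sqr.
  rewrite /e1 /e2 /dist2 /dot /psub /= => h.
  apply: (@eq_via _ _ _ (-1/a0^+2) (a0^+2 - ((B.1 - C.1) * (B.1 - C.1) + (B.2 - C.2) * (B.2 - C.2)))).
    by field.
  by rewrite h subrr.
pose pl := pull B e1 e2.
have pB : pl B = Bf by rewrite /pl /pull /Bf !subrr !mul0r addr0 subrr.
have pC : pl C = (a0, 0).
  have h : a0^+2 = dist2 B C by rewrite /a0 dist_sqr.
  move: h; rewrite /pl /pull /e1 /e2 /dist2 /dot /psub /= => h.
  congr (_, _); last by field.
  apply: (@eq_via _ _ _ (-1/a0) (a0^+2 - ((B.1 - C.1) * (B.1 - C.1) + (B.2 - C.2) * (B.2 - C.2)))).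
    by field.
  by rewrite h subrr.
have hq : (pl A).2 != 0.
  apply/eqP => hq0; apply: nc; apply/(pull_coll B he).
  rewrite -/pl pB pC; move: hq0; case: (pl A) => p q /= ->; rewrite /collinear /Bf /=; ring.
have [x [y [r [[hx hy hr hd] [eA eC eI]]]]] := @frame R a0 (pl A).1 (pl A).2 ha0 hq.
have tA : pl A = Af x y r by rewrite -eA; case: (pl A).
have tC : pl C = Cf x y by rewrite pC eC.
have hs : dist B C + dist C A + dist A B != 0.
  by rewrite gt_eqF // -/a0 ltr_wpDr ?dist_ge0 // ltr_wpDr ?dist_ge0.
have tI : pl (incenter A B C) = (x, r).
  by rewrite /pl pull_incenter // -/pl pB pC -eI; congr incenter; case: (pl A).
have k1 : is_orthocenter (pl H) (Af x y r) Bf (Cf x y).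
  by rewrite -tA -pB -tC; apply/(pull_orth B he).
have k2 : is_orthocenter (pl HA) Bf (x, r) (Cf x y).
  by rewrite -tI -pB -tC; apply/(pull_orth B he).
have k3 : is_orthocenter (pl HB) (Cf x y) (x, r) (Af x y r).
  by rewrite -tA -tI -tC; apply/(pull_orth B he).
have k4 : is_orthocenter (pl HC) (Af x y r) (x, r) Bf.
  by rewrite -tA -tI -pB; apply/(pull_orth B he).
have k5 : is_circumcenter (pl OA) (Af x y r) (pl HB) (pl HC).
  by rewrite -tA; apply/(pull_circ B he).
have k6 : is_circumcenter (pl OB) Bf (pl HC) (pl HA).
  by rewrite -pB; apply/(pull_circ B he).
have k7 : is_circumcenter (pl OC) (Cf x y) (pl HA) (pl HB).
  by rewrite -tC; apply/(pull_circ B he).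
have k8 : is_circumcenter (pl Or) (pl OA) (pl OB) (pl OC).
  by apply/(pull_circ B he).
have [[X' [h1 [h2 h3]]] hall] := core hx hy hr hd k1 k2 k3 k4 k5 k6 k7 k8.
split.
  exists (push B e1 e2 X').
  move: h1 h2 h3; rewrite -tA -pB -tC -{1 2 3}(pull_push B he X').
  by move=> /(pull_oncircle B he) g1 /(pull_oncircle B he) g2 /(pull_oncircle B he) g3.
move=> X f1 f2 f3.
apply/(pull_coll B he); apply: hall; rewrite -?tA -?pB -?tC; exact/(pull_oncircle B he).
Qed.
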